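(* Let $p_1<\dots<p_m$ be real numbers with $m\ge3$, let $M=\max_{i,j}|p_i-p_j|$, and define $M_0^2=\sum_{1\le i<j\le m}(p_j-p_i)^2$ and $M_{k+1}^2=\big(\sum_{1\le i<j\le m}\frac{1}{(p_i-p_j)^2-M_{k}^2}\big)^{-1}+M_{k}^2$ for $k\ge0$. Then for every $k\ge0$, $$0<\frac{2}{m(m-1)}\Big(1-\frac{M^2}{M_k^2}\Big)<1-\frac{M_{k+1}^2}{M_k^2}<1-\frac{M^2}{M_k^2}.$$ *)

(* Defs.v *)
From HB Require Import structures.
From mathcomp Require Import all_boot all_order all_algebra.
From mathcomp Require Import reals.
Set Implicit Arguments. Unset Strict Implicit. Unset Printing Implicit Defensive.
Import Order.TTheory GRing.Theory Num.Theory.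
Local Open Scope ring_scope.

(* M = max_{i,j} |p_i - p_j| (all terms are >= 0, so 0 is a neutral start). *)
Definition Mmax (R : realType) (m : nat) (p : 'I_m -> R) : R :=
  \big[Num.max/0]_(i < m) \big[Num.max/0]_(j < m) `|p i - p j|.

Fixpoint Msq (R : realType) (m : nat) (p : 'I_m -> R) (k : nat) : R :=
  match k with
  | 0%N => \sum_(i < m) \sum_(j < m | (i < j)%N) (p j - p i) ^+ 2
  | k'.+1 =>
      (\sum_(i < m) \sum_(j < m | (i < j)%N)
          ((p i - p j) ^+ 2 - Msq p k')^-1)^-1 + Msq p k'
  end.

(* Main.v *)
Require Import Defs.
From HB Require Import structures.
From mathcomp Require Import all_boot all_order all_algebra.
From mathcomp Require Import reals ring lra zify.
Import Order.TTheory GRing.Theory Num.Theory.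
Set Implicit Arguments. Unset Strict Implicit. Unset Printing Implicit Defensive.
Local Open Scope ring_scope.

Definition PS (R : realType) (m : nat) (F : 'I_m -> 'I_m -> R) : R :=
  \sum_(i < m) \sum_(j < m | (i < j)%N) F i j.

Lemma inner_count (R : realType) (m : nat) (i : 'I_m) (x : R) :
  \sum_(j < m | (i < j)%N) x = x *+ (m - i.+1).
Proof.
rewrite -(big_mkord (fun j => (i < j)%N) (fun _ => x)).
rewrite (big_cat_nat _ (n:=i.+1)) ?ltn_ord //=.
rewrite big_nat_cond big1 ?add0r; last first.
  by move=> j /andP[/andP[_ hj] hij]; move: (leq_trans hij hj); rewrite ltnn.
rewrite -sumr_const_nat big_nat_cond [RHS]big_nat_cond.
by apply: eq_bigl => j; rewrite andbT; case/boolP: (i.+1 <= j < m)%N => // /andP[].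
Qed.

Lemma bin2_2 m : ('C(m, 2) * 2 = m * (m - 1))%N.
Proof.
elim: m => [|m IH] //; rewrite binS bin1 mulnDl IH; case: m {IH} => // m. rewrite !subn1 /=. nia.
Qed.

Lemma PS_const (R : realType) (m : nat) (x : R) :
  @PS R m (fun _ _ => x) = x *+ 'C(m, 2).
Proof.
rewrite /PS (eq_bigr (fun i : 'I_m => x *+ (m - i.+1))); last by move=> i _; rewrite inner_count.
rewrite sumrMnr -bin2_sum.
by rewrite big_rev_mkord subn0.
Qed.

Lemma pair_ge (R : realType) (m : nat) (F : 'I_m -> 'I_m -> R) (i0 j0 : 'I_m) :
  (forall i j : 'I_m, (i < j)%N -> 0 <= F i j) -> (i0 < j0)%N -> F i0 j0 <= PS F.
Proof.
move=> h h0; rewrite /PS (bigD1 i0) //= (bigD1 j0) //= -addrA lerDl.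
apply: addr_ge0; first by apply: sumr_ge0 => j /andP[hj _]; apply: h.
by apply: sumr_ge0 => i _; apply: sumr_ge0 => j hj; apply: h.
Qed.

Lemma pair_lt (R : realType) (m : nat) (F G : 'I_m -> 'I_m -> R) (i0 j0 : 'I_m) :
  (forall i j : 'I_m, (i < j)%N -> F i j <= G i j) -> (i0 < j0)%N ->
  F i0 j0 < G i0 j0 -> PS F < PS G.
Proof.
move=> h h0 h1; rewrite /PS (bigD1 i0) //= [X in _ < X](bigD1 i0) //=.
apply: ltr_leD; last by apply: ler_sum => i _; apply: ler_sum => j hj; apply: h.
rewrite (bigD1 j0) //= [X in _ < X](bigD1 j0) //=; apply: ltr_leD => //.
by apply: ler_sum => j /andP[hj _]; apply: h.
Qed.

Theorem mainTheorem9 (R : realType) (m : nat) (p : 'I_m -> R)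
  (hm : (3 <= m)%N)
  (hp : forall i j : 'I_m, (i < j)%N -> p i < p j) (k : nat) :
  0 < 2 / (m * (m - 1))%:R * (1 - Mmax p ^+ 2 / Msq p k) /\
  2 / (m * (m - 1))%:R * (1 - Mmax p ^+ 2 / Msq p k) < 1 - Msq p k.+1 / Msq p k /\
  1 - Msq p k.+1 / Msq p k < 1 - Mmax p ^+ 2 / Msq p k.
Proof.
case: m p hp hm => [|[|[|n]]] p hp hm //.
set a : 'I_n.+3 := ord0.
set b : 'I_n.+3 := ord_max.
set c : 'I_n.+3 := Ordinal (isT : (1 < n.+3)%N).
pose d (i j : 'I_n.+3) := (p i - p j) ^+ 2.
pose D := (p b - p a) ^+ 2.
have mono : forall i j : 'I_n.+3, (i <= j)%N -> p i <= p j.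
  move=> i j; rewrite leq_eqVlt => /orP[/eqP/val_inj -> //|/hp/ltW //].
have pa i : p a <= p i by apply: mono.
have pb i : p i <= p b by apply: mono; rewrite -ltnS.
have hab : p a < p c by apply: hp.
have hcb : p c < p b by apply: hp.
have hdle (i j : 'I_n.+3) : (i < j)%N -> d i j <= D.
  move=> hij; have := hp _ _ hij; have := pa i; have := pb j.
  rewrite /d /D => h1 h2 h3; nra.
have hdpos (i j : 'I_n.+3) : (i < j)%N -> 0 < d i j.
  move=> hij; have := hp _ _ hij; rewrite /d => h; nra.
have hdc : d a c < D by rewrite /d /D; nra.
have hdb : d a b = D by rewrite /d /D -sqrrN opprB.
have hbc : (b == c) = false by apply/eqP => /(congr1 val).
have hM : Mmax p ^+ 2 = D.
  have -> : Mmax p = p b - p a; last by [].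
  apply/eqP; rewrite eq_le; apply/andP; split.
    apply: (big_ind (fun v => v <= p b - p a)).
    - by rewrite subr_ge0.
    - by move=> x y hx hy; rewrite ge_max hx hy.
    move=> i _; apply: (big_ind (fun v => v <= p b - p a)).
    - by rewrite subr_ge0.
    - by move=> x y hx hy; rewrite ge_max hx hy.
    move=> j _; rewrite ler_norml; have := pa i; have := pb i; have := pa j; have := pb j.
    move=> *; apply/andP; split; lra.
  rewrite /Mmax (bigD1 b) //= le_max; apply/orP; left.
  rewrite (bigD1 a) //= le_max; apply/orP; left.
  by rewrite ger0_norm // subr_ge0.
rewrite hM.
pose T S := PS (fun i j : 'I_n.+3 => (S - d i j)^-1).
have hC : (0 < 'C(n.+3, 2))%N by rewrite bin_gt0.
have key S : D < S -> (S - D)^-1 < T S /\ T S < (S - D)^-1 *+ 'C(n.+3, 2).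
  move=> hS; split.
    pose F (i j : 'I_n.+3) := if (i == a) && (j == c) then 0 else (S - d i j)^-1.
    apply: (@le_lt_trans _ _ (PS F)).
      have hF : F a b = (S - D)^-1 by rewrite /F eqxx hbc /= hdb.
      rewrite -hF; apply: (@pair_ge R _ F a b) => //.
      move=> i j hij; rewrite /F; case: ifP => _ //; rewrite invr_ge0 subr_ge0.
      by apply: (le_trans (hdle _ _ hij)); apply: ltW.
    apply: (@pair_lt R _ F _ a c) => //.
      move=> i j hij; rewrite /F; case: ifP => _ //; rewrite invr_ge0 subr_ge0.
      by apply: (le_trans (hdle _ _ hij)); apply: ltW.
    by rewrite /F !eqxx /= invr_gt0 subr_gt0 (lt_trans hdc).
  rewrite -PS_const; apply: (@pair_lt R _ _ _ a c) => //.
    move=> i j hij; rewrite lef_pV2 ?posrE ?subr_gt0 //; last first.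
      by apply: (le_lt_trans (hdle _ _ hij)).
    by have := hdle _ _ hij; lra.
  rewrite ltf_pV2 ?posrE ?subr_gt0 //; [lra| exact: (lt_trans hdc)].
have hMsq k' : Msq p k'.+1 = Msq p k' - (T (Msq p k'))^-1.
  rewrite [LHS]/=.
  have -> : \sum_(i < n.+3) \sum_(j < n.+3 | (i < j)%N) ((p i - p j) ^+ 2 - Msq p k')^-1
      = - T (Msq p k').
    rewrite /T /PS -sumrN; apply: eq_bigr => i _; rewrite -sumrN.
    by apply: eq_bigr => j _; rewrite -invrN opprB.
  by rewrite invrN addrC.
have hDpos : 0 < D by rewrite -hdb hdpos.
have Tinv S : D < S -> 0 < T S /\ (T S)^-1 < S - D.
  move=> hS; have [h1 _] := key _ hS.
  have hT : 0 < T S by apply: lt_trans h1; rewrite invr_gt0 subr_gt0.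
  split => //; rewrite -[S - D]invrK ltf_pV2 ?posrE ?invr_gt0 ?subr_gt0 //.
have inv : forall k', D < Msq p k'.
  elim => [|k' IH].
    pose F (i j : 'I_n.+3) := if (i == a) && (j == c) then 0 else (p j - p i) ^+ 2.
    apply: (@le_lt_trans _ _ (PS F)).
      have hF : F a b = D by rewrite /F eqxx hbc.
      rewrite -hF; apply: (@pair_ge R _ F a b) => // i j _; rewrite /F; case: ifP => _ //; exact: sqr_ge0.
    apply: (@pair_lt R _ F (fun i j => (p j - p i) ^+ 2) a c) => //.
      by move=> i j _; rewrite /F; case: ifP => _ //; exact: sqr_ge0.
    by rewrite /F !eqxx /= exprn_gt0 // subr_gt0.
  rewrite hMsq; have [_ h] := Tinv _ IH; lra.
rewrite hMsq; set S := Msq p k.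
have hS := inv k.
have [h1 h2] := key _ hS.
have [hT hTi] := Tinv _ hS.
have hSp : 0 < S by apply: lt_trans hS.
set Cr : R := ('C(n.+3, 2))%:R.
have hCr : 0 < Cr by rewrite ltr0n.
have hc : 2 / (n.+3 * (n.+3 - 1))%:R = Cr^-1.
  by rewrite -bin2_2 natrM -/Cr invfM mulrCA divff ?mulr1 // pnatr_eq0.
rewrite hc.
have e3 : 1 - (S - (T S)^-1) / S = (T S)^-1 / S.
  by field; rewrite ?lt0r_neq0 ?ltr0n.
have e2 : Cr^-1 * (1 - D / S) = ((S - D) / Cr) / S.
  by field; rewrite ?lt0r_neq0 ?ltr0n.
have e4 : 1 - D / S = (S - D) / S.
  by field; rewrite ?lt0r_neq0 ?ltr0n.
rewrite e3 e2 e4 !ltr_pM2r ?invr_gt0 //; split; last split => //.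
  by rewrite !mulr_gt0 ?invr_gt0 ?subr_gt0.
rewrite -[_ / Cr]invrK ltf_pV2 ?posrE ?invr_gt0 ?divr_gt0 ?subr_gt0 //.
by rewrite invf_div mulrC /Cr mulr_natr.
Qed.
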